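(* (a) Let $(F[n])_{n\in\mathbb N_0}$ with coface operators $F(\delta^k)\colon F[n-1]\to F[n]$ ($k=0,\dots,n$, $n\in\mathbb N$) be an SCO in a category $\mathcal C$. Consider the filtration $F[0]\xrightarrow{i_1}F[1]\xrightarrow{i_2}\cdots$ with $i_n:=F(\delta^n)$, and suppose it has an $\omega$-colimit $F_\infty$ with canonical morphisms $\mu_n\colon F[n]\to F_\infty$. For $n\in\mathbb N$, $k\in\mathbb N_0$ set $\alpha_k^{(n)}:=F(\delta^k)\colon F[n-1]\to F[n]$ if $k\le n$ and $\alpha_k^{(n)}:=F(\delta^n)$ if $k>n$. Then for each $k$ the family $(\alpha_k^{(n)})_{n\in\mathbb N}$ determines an adapted endomorphism $\alpha_k$ of $F_\infty$ (i.e. $\mu_{n+1}\alpha_k^{(n+1)}i_n=\mu_n\alpha_k^{(n)}$ for all $n$, and $\alpha_k$ is the unique morphism with $\alpha_k\mu_{n-1}=\mu_n\alpha_k^{(n)}$ for all $n$), and $(\alpha_k)_{k\in\mathbb N_0}$ is an SCO-system of partial shifts for this filtration (called the SCO-system canonically associated to the SCO). (b) Conversely, let $(\alpha_k)_{k\in\mathbb N_0}$ be an SCO-system of partial shifts for a filtration $(F_n,i_n)$ with $\omega$-colimit $F_\infty$ whose canonical morphisms $\mu_n\colon F_n\to F_\infty$ are all monic, with $\alpha_k$ determined by $(\alpha_k^{(n)})_{n\in\mathbb N}$. Then $F[n]:=F_n$ together with $F(\delta^k):=\alpha_k^{(n)}\colon F[n-1]\to F[n]$ for $k=0,\dots,n$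 is an SCO in $\mathcal C$, and $(\alpha_k)_{k\in\mathbb N_0}$ is the SCO-system of partial shifts canonically associated (as in (a)) to this SCO.
   Context: A semi-cosimplicial object (SCO) in a category $\mathcal C$ is a sequence $(F^n)_{n\in\mathbb N_0}$ of objects with morphisms (coface operators) $\delta^k\colon F^{n-1}\to F^n$ ($k=0,\dots,n$, $n\in\mathbb N$) satisfying the cosimplicial identities $\delta^j\delta^i=\delta^i\delta^{j-1}$ whenever $i<j$. A filtration is a sequence of objects $F_n$ ($n\in\mathbb N_0$) with morphisms $i_n\colon F_{n-1}\to F_n$; its $\omega$-colimit is $F_\infty$ with $\mu_n\colon F_n\to F_\infty$, $\mu_ni_n=\mu_{n-1}$, universal among such cones. A morphism $\alpha\colon F_\infty\to F_\infty$ is an adapted endomorphism determined by $\alpha^{(n)}\colon F_{n-1}\to F_n$ ($n\in\mathbb N$) if $\mu_{n+1}\alpha^{(n+1)}i_n=\mu_n\alpha^{(n)}$ and $\alpha\mu_{n-1}=\mu_n\alpha^{(n)}$ for all $n$. A sequence $(\alpha_k)_{k\in\mathbb N_0}$ of adapted endomorphisms for a common filtration is an SCO-system of partial shifts if (1) $\alpha_k\mu_{k-1}=\mu_{k-1}$ for each $k\in\mathbb N$, and (2) $\alpha_j\alpha_i=\alpha_i\alpha_{j-1}$ for all $i<j$ in $\mathbb N_0$. *)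

(* Defs.v *)
From Stdlib Require Import Arith.
Set Implicit Arguments.
Unset Strict Implicit.

Record Category := {
  Ob :> Type;
  Hom : Ob -> Ob -> Type;
  comp : forall a b c : Ob, Hom b c -> Hom a b -> Hom a c;
  idm : forall a : Ob, Hom a a;
  comp_assoc : forall a b c d (h : Hom c d) (g : Hom b c) (f : Hom a b),
      comp h (comp g f) = comp (comp h g) f;
  comp_id_l : forall a b (f : Hom a b), comp (idm b) f = f;
  comp_id_r : forall a b (f : Hom a b), comp f (idm a) = f
}.

Arguments comp {c a b c0} _ _ : rename.
Arguments Hom : clear implicits.
Arguments idm {c0} a : rename.
Notation "g \o f" := (comp g f) (at level 40, left associativity).

Section Defs.
Variable C : Category.

Definition monic (a b : C) (f : Hom C a b) : Prop :=
  forall (x : C) (g h : Hom C x a), f \o g = f \o h -> g = h.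

(* INDEXING CONVENTION (shift by one): [delta n k : F n -> F (S n)] is the
   paper's coface F(delta^k) : F[n] -> F[n+1] (paper index n+1), meaningful
   for k <= n+1. *)
Definition is_SCO (F : nat -> C) (delta : forall n : nat, nat -> Hom C (F n) (F (S n)))
  : Prop :=
  forall n i j, i < j -> j <= S (S n) ->
    delta (S n) j \o delta n i = delta (S n) i \o delta n (j - 1).

(* A filtration is (Fn, i) with [i n : Fn n -> Fn (S n)] the paper's i_{n+1}.
   omega-colimit (Finf, mu): a universal cocone. *)
Definition is_omega_colimit (Fn : nat -> C) (i : forall n, Hom C (Fn n) (Fn (S n)))
  (Finf : C) (mu : forall n, Hom C (Fn n) Finf) : Prop :=
  (forall n, mu (S n) \o i n = mu n) /\
  (forall (X : C) (c : forall n, Hom C (Fn n) X),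
      (forall n, c (S n) \o i n = c n) ->
      exists u : Hom C Finf X,
        (forall n, u \o mu n = c n) /\
        (forall v : Hom C Finf X, (forall n, v \o mu n = c n) -> v = u)).

(* [a n : Fn n -> Fn (S n)] is the paper's alpha^{(n+1)}.
   alpha is the adapted endomorphism determined by a. *)
Definition adapted (Fn : nat -> C) (i : forall n, Hom C (Fn n) (Fn (S n)))
  (Finf : C) (mu : forall n, Hom C (Fn n) Finf)
  (alpha : Hom C Finf Finf) (a : forall n, Hom C (Fn n) (Fn (S n))) : Prop :=
  (forall n, mu (S (S n)) \o a (S n) \o i n = mu (S n) \o a n) /\
  (forall n, alpha \o mu n = mu (S n) \o a n).

Definition is_SCO_system (Fn : nat -> C) (i : forall n, Hom C (Fn n) (Fn (S n)))
  (Finf : C) (mu : forall n, Hom C (Fn n) Finf) (alpha : nat -> Hom C Finf Finf)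
  : Prop :=
  (forall k, exists a, adapted i mu (alpha k) a) /\
  (forall k, alpha (S k) \o mu k = mu k) /\
  (forall i0 j, i0 < j -> alpha j \o alpha i0 = alpha i0 \o alpha (j - 1)).

(* The canonical families of part (a): [canon_alpha delta k n] is the paper's
   alpha_k^{(n+1)} = F(delta^k) if k <= n+1, and F(delta^{n+1}) otherwise. *)
Definition canon_alpha (F : nat -> C) (delta : forall n : nat, nat -> Hom C (F n) (F (S n)))
  (k n : nat) : Hom C (F n) (F (S n)) :=
  if k <=? S n then delta n k else delta n (S n).

End Defs.

(* Main.v *)
Require Import Defs.
From Stdlib Require Import Arith Lia ClassicalEpsilon.

Section H.
Variable C : Category.

Lemma colim_ext (Fn : nat -> C) (i : forall n, Hom C (Fn n) (Fn (S n)))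
  (Finf : C) (mu : forall n, Hom C (Fn n) Finf) (X : C) (f g : Hom C Finf X) :
  is_omega_colimit i mu -> (forall n, f \o mu n = g \o mu n) -> f = g.
Proof.
  intros [Hc Hu] E.
  destruct (Hu X (fun n => g \o mu n)) as [u [_ Hun]].
  - intro n. rewrite <- comp_assoc, Hc. reflexivity.
  - rewrite (Hun f E), (Hun g (fun n => eq_refl)). reflexivity.
Qed.

Lemma canon_cocone (F : nat -> C) (delta : forall n : nat, nat -> Hom C (F n) (F (S n))) :
  is_SCO delta -> forall k n,
  canon_alpha delta k (S n) \o delta n (S n) = delta (S n) (S (S n)) \o canon_alpha delta k n.
Proof.
  intros HS k n. unfold canon_alpha.
  destruct (Nat.leb_spec0 k (S n)) as [H1|H1];
  destruct (Nat.leb_spec0 k (S (S n))) as [H2|H2].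
  - symmetry. apply (HS n k (S (S n))); lia.
  - lia.
  - assert (k = S (S n)) by lia. subst k. reflexivity.
  - reflexivity.
Qed.

Lemma canon_sco (F : nat -> C) (delta : forall n : nat, nat -> Hom C (F n) (F (S n))) :
  is_SCO delta -> forall i j n, i < j ->
  canon_alpha delta j (S n) \o canon_alpha delta i n
  = canon_alpha delta i (S n) \o canon_alpha delta (j - 1) n.
Proof.
  intros HS i j n Hij. unfold canon_alpha.
  destruct (Nat.leb_spec0 j (S (S n))) as [H1|H1].
  - destruct (Nat.leb_spec0 i (S n)) as [H2|H2]; [|lia].
    destruct (Nat.leb_spec0 i (S (S n))) as [H3|H3]; [|lia].
    destruct (Nat.leb_spec0 (j-1) (S n)) as [H4|H4]; [|lia].
    apply HS; lia.
  - destruct (Nat.leb_spec0 (j-1) (S n)) as [H4|H4]; [lia|].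
    destruct (Nat.leb_spec0 i (S n)) as [H2|H2].
    + destruct (Nat.leb_spec0 i (S (S n))) as [H3|H3]; [|lia].
      apply (HS n i (S (S n))); lia.
    + destruct (Nat.leb_spec0 i (S (S n))) as [H3|H3].
      * assert (i = S (S n)) by lia. subst i. reflexivity.
      * reflexivity.
Qed.

End H.

Theorem mainTheorem3 (C : Category) :
  (* (a) *)
  (forall (F : nat -> C) (delta : forall n : nat, nat -> Hom C (F n) (F (S n)))
          (Finf : C) (mu : forall n, Hom C (F n) Finf),
      is_SCO delta ->
      is_omega_colimit (fun n => delta n (S n)) mu ->
      exists alpha : nat -> Hom C Finf Finf,
        (forall k, adapted (fun n => delta n (S n)) mu (alpha k) (canon_alpha delta k)) /\
        (forall k (beta : Hom C Finf Finf),
            (forall n, beta \o mu n = mu (S n) \o canon_alpha delta k n) ->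
            beta = alpha k) /\
        is_SCO_system (fun n => delta n (S n)) mu alpha)
  /\
  (* (b) *)
  (forall (Fn : nat -> C) (i : forall n, Hom C (Fn n) (Fn (S n)))
          (Finf : C) (mu : forall n, Hom C (Fn n) Finf)
          (alpha : nat -> Hom C Finf Finf)
          (a : nat -> forall n, Hom C (Fn n) (Fn (S n))),
      is_omega_colimit i mu ->
      (forall n, monic (mu n)) ->
      (forall k, adapted i mu (alpha k) (a k)) ->
      is_SCO_system i mu alpha ->
      is_SCO (fun n k => a k n) /\
      (forall n, i n = a (S n) n) /\
      (forall k n, a k n = canon_alpha (fun n k => a k n) k n)).
Proof.
  split.
  - intros F delta Finf mu HS HC.
    assert (Hcoc : forall k n, mu (S (S n)) \o canon_alpha delta k (S n) \o delta n (S n)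
                              = mu (S n) \o canon_alpha delta k n).
    { intros k n. rewrite <- comp_assoc, canon_cocone by exact HS.
      rewrite comp_assoc. destruct HC as [Hc _]. rewrite Hc. reflexivity. }
    assert (Hex : forall k, { u : Hom C Finf Finf |
       (forall n, u \o mu n = mu (S n) \o canon_alpha delta k n) }).
    { intro k. apply constructive_indefinite_description.
      destruct HC as [Hc Hu].
      destruct (Hu Finf (fun n => mu (S n) \o canon_alpha delta k n)) as [u [Hu1 _]].
      - intro n. apply Hcoc.
      - exists u. exact Hu1. }
    exists (fun k => proj1_sig (Hex k)).
    assert (Had : forall k, adapted (fun n => delta n (S n)) mu (proj1_sig (Hex k)) (canon_alpha delta k)).
    { intro k. split.
      - intro n. apply Hcoc.
      - intro n. apply (proj2_sig (Hex k)). }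
    split; [exact Had|]. split.
    + intros k beta Hb. eapply colim_ext; [exact HC|]. intro n.
      rewrite Hb, (proj2_sig (Hex k)). reflexivity.
    + split; [intro k; eexists; apply Had|]. split.
      * intro k. rewrite (proj2_sig (Hex (S k))). unfold canon_alpha.
        rewrite Nat.leb_refl. destruct HC as [Hc _]. apply Hc.
      * intros i0 j Hij. eapply colim_ext; [exact HC|]. intro n.
        rewrite <- !comp_assoc, (proj2_sig (Hex i0)), (proj2_sig (Hex (j-1))).
        rewrite !comp_assoc, (proj2_sig (Hex j)), (proj2_sig (Hex i0)).
        rewrite <- !comp_assoc, canon_sco by assumption. reflexivity.
  - intros Fn i Finf mu alpha a HC Hmono Had [_ [H1 H2]].
    destruct HC as [Hc Hu].
    assert (Hn : forall n, i n = a (S n) n).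
    { intro n. apply (Hmono (S n)). rewrite Hc, <- (proj2 (Had (S n)) n). symmetry. apply H1. }
    assert (Hd : forall d n, alpha (S (d + n)) \o mu n = mu n).
    { induction d; intro n.
      - apply H1.
      - replace (S (S d + n)) with (S (d + S n)) by lia.
        rewrite <- (Hc n), comp_assoc, IHd. reflexivity. }
    split; [|split; [exact Hn|]].
    + intros n i0 j Hij Hj. apply (Hmono (S (S n))). cbn.
      rewrite !comp_assoc, <- (proj2 (Had j) (S n)), <- (proj2 (Had i0) (S n)).
      rewrite <- !comp_assoc, <- (proj2 (Had i0) n), <- (proj2 (Had (j-1)) n).
      rewrite !comp_assoc, H2 by exact Hij. reflexivity.
    + intros k n. unfold canon_alpha.
      destruct (Nat.leb_spec0 k (S n)) as [Hk|Hk]; [reflexivity|].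
      apply (Hmono (S n)). rewrite <- (proj2 (Had k) n), <- (proj2 (Had (S n)) n), H1.
      replace k with (S ((k - S (S n)) + S n)) by lia.
      rewrite <- (Hc n), comp_assoc, Hd. reflexivity.
Qed.
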